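(* Let $n=p_1^{\alpha_1}p_2^{\alpha_2}\cdots p_r^{\alpha_r}$ be a positive integer, where the $p_i$ are primes with $2<p_1<p_2<\cdots<p_r=p$ and $\alpha_i>0$ for each $1\le i\le r$. If $p\ge 37$, then $$\psi(C_n)\ \ge\ h'(12)\,\frac{n^2}{p+1},$$ where $h'(12)=37\cdot\prod_{i=2}^{11}\frac{q_i}{q_i+1}=37\cdot\frac{3}{4}\cdot\frac{5}{6}\cdot\frac{7}{8}\cdot\frac{11}{12}\cdot\frac{13}{14}\cdot\frac{17}{18}\cdot\frac{19}{20}\cdot\frac{23}{24}\cdot\frac{29}{30}\cdot\frac{31}{32}$.
   Context: For a finite group $G$, $\psi(G)=\sum_{g\in G} o(g)$, where $o(g)$ is the order of $g$; $C_n$ is the cyclic group of order $n$. Let $2=q_1<q_2<q_3<\cdots$ be the list of all primes in increasing order. Define $f'(1)=1$, $f'(r)=\prod_{i=2}^{r}\frac{q_i}{q_i+1}$ for $r\ge 2$, and $h'(2)=3$, $h'(s)=f'(s-1)\,q_s$ for $s\ge 2$; in particular $q_{12}=37$. *)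

(* Defs.v *)
From HB Require Import structures.
From mathcomp Require Import all_boot all_order all_algebra all_fingroup all_solvable.
Set Implicit Arguments. Unset Strict Implicit. Unset Printing Implicit Defensive.
Import Order.TTheory GRing.Theory Num.Theory.

Definition psi (gT : finGroupType) (G : {set gT}) : nat := \sum_(g in G) #[g]%g.

(* h'(12) = q_12 * f'(11) = 37 * prod_{i=2}^{11} q_i/(q_i+1), where
   q_2,...,q_11 are exactly the primes q with 3 <= q <= 31. *)
Definition h12 : rat :=
  (37%:R * \prod_(3 <= q < 32 | prime q) ((q%:R : rat) / (q.+1)%:R))%R.

(* Main.v *)
Require Import Defs.
From HB Require Import structures.
From mathcomp Require Import all_boot all_order all_algebra all_fingroup all_solvable.
From mathcomp Require Import zify ring lra.
Import Order.TTheory GRing.Theory Num.Theory.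
Set Implicit Arguments. Unset Strict Implicit. Unset Printing Implicit Defensive.

Definition S (n : nat) : nat := \sum_(0 <= k < n) n %/ gcdn n k.

Lemma psi_cyclic gT (G : {group gT}) : cyclic G -> psi G = S #|G|.
Proof.
case/cyclicP=> x ->; rewrite /psi -orderE.
have -> : <[x]>%g = [set (x ^+ (val k))%g | k : 'I_#[x]%g].
  apply/setP=> y; apply/idP/imsetP.
    by case/cyclePmin=> i lti ->; exists (Ordinal lti).
  by case=> k _ ->; apply: mem_cycle.
rewrite big_imset /=.
  rewrite /S big_mkord; apply: eq_bigr=> k _; by rewrite orderXgcd.
move=> i j _ _ /eqP; rewrite eq_expg_mod_order !modn_small // => /eqP.
exact: val_inj.
Qed.
Lemma sum_split (m n : nat) (F : nat -> nat) :
  \sum_(0 <= k < m * n) F k = \sum_(0 <= j < m) \sum_(0 <= r < n) F (j * n + r).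
Proof.
elim: m => [|m IH]; first by rewrite mul0n !big_geq.
rewrite big_nat_recr //= -IH mulSn addnC (big_cat_nat _ (leq_addr n (m * n))) //=.
congr (_ + _).
rewrite -{1}(add0n (m * n)) big_addn addKn; apply: eq_bigr => r _.
by rewrite addnC.
Qed.

Lemma S_pexp (q a : nat) : prime q ->
  S (q ^ a.+1) = S (q ^ a) + (q - 1) * q ^ a * q ^ a.+1.
Proof.
move=> pq; have q0 : 0 < q by exact: prime_gt0.
rewrite {1}/S expnSr sum_split.
rewrite (eq_bigr (fun j => q ^ a %/ gcdn (q ^ a) j + (q - 1) * q ^ a.+1)).
  by rewrite big_split /= sum_nat_const_nat subn0 -expnSr mulnCA mulnA.
move=> j _.
rewrite big_ltn // addn0 -muln_gcdl divnMr //; congr (_ + _).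
rewrite -[q ^ a * q]expnSr.
rewrite (@eq_big_nat _ _ _ 1 q _ (fun _ => q ^ a.+1)); first by rewrite sum_nat_const_nat mulnC.
move=> r /andP[h1 hr].
have: coprime (q ^ a.+1) (j * q + r).
  rewrite coprime_pexpl // prime_coprime // dvdn_addr ?dvdn_mull //.
  by rewrite gtnNdvd.
by rewrite /coprime => /eqP ->; rewrite divn1.
Qed.

Lemma S_pexp_eq (q a : nat) : prime q -> (q + 1) * S (q ^ a) = q ^ a.*2.+1 + 1.
Proof.
move=> pq; have q0 : 0 < q by exact: prime_gt0.
elim: a => [|a IH].
  by rewrite /S expn0 big_nat1 gcdn0 divnn /= muln1 expn1.
rewrite S_pexp // mulnDr IH doubleS !expnS.
case: q pq q0 {IH} => // q _ _.
rewrite subn1 /= -!mulnA. 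
have -> : q.+1 ^ a.*2 = q.+1 ^ a * q.+1 ^ a by rewrite -addnn expnD.
set Y := q.+1 ^ a.
nia.
Qed.

Lemma gcd_coprimeM m q k : coprime m q -> gcdn (m * q) k = gcdn m k * gcdn q k.
Proof.
move=> cmq.
set g := gcdn (m * q) k; set a := gcdn m k; set b := gcdn q k.
apply/eqP; rewrite eqn_dvd; apply/andP; split.
  have gk : g %| k by exact: dvdn_gcdr.
  have h1 : g %| gcdn g m * q.
    by rewrite muln_gcdl dvdn_gcd dvdn_mulr //= dvdn_gcdl.
  have h2 : g %| gcdn g m * k by exact: dvdn_mull.
  have h3 : g %| gcdn g m * b by rewrite /b muln_gcdr dvdn_gcd h1.
  apply: dvdn_trans h3 _; apply: dvdn_mul => //.
  by rewrite dvdn_gcd dvdn_gcdr (dvdn_trans (dvdn_gcdl _ _) gk).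
rewrite dvdn_gcd dvdn_mul ?dvdn_gcdl //= Gauss_dvd ?dvdn_gcdr //.
apply: (coprime_dvdl (dvdn_gcdl _ _)); apply: (coprime_dvdr (dvdn_gcdl _ _)).
exact: cmq.
Qed.

Lemma div_coprimeM m q k : 0 < m -> 0 < q -> coprime m q ->
  (m * q) %/ gcdn (m * q) k = (m %/ gcdn m k) * (q %/ gcdn q k).
Proof.
move=> m0 q0 cmq; rewrite gcd_coprimeM //.
have a0 : 0 < gcdn m k by rewrite gcdn_gt0 m0.
have b0 : 0 < gcdn q k by rewrite gcdn_gt0 q0.
rewrite -{1}(divnK (dvdn_gcdl m k)) -{1}(divnK (dvdn_gcdl q k)).
by rewrite mulnACA mulnK // muln_gt0 a0 b0.
Qed.

Lemma gcdn_modd d N : d %| N -> forall x, gcdn d (x %% N) = gcdn d x.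
Proof. by move=> dN x; rewrite -gcdn_modr modn_dvdm // gcdn_modr. Qed.

Lemma S_mul m q : 0 < m -> 0 < q -> coprime m q -> S (m * q) = S m * S q.
Proof.
move=> m0 q0 cmq; rewrite /S !big_mkord.
have mq0 : 0 < m * q by rewrite muln_gt0 m0.
pose h (p : 'I_m * 'I_q) : 'I_(m * q) :=
  Ordinal (ltn_pmod (chinese m q p.1 p.2) mq0).
pose h' (k : 'I_(m * q)) : 'I_m * 'I_q :=
  (Ordinal (ltn_pmod k m0), Ordinal (ltn_pmod k q0)).
rewrite (reindex h); last first.
  exists h' => [[i j] _|k _].
    apply/eqP; rewrite xpair_eqE /=; apply/andP; split; apply/eqP; apply: val_inj => /=.
      by rewrite modn_dvdm ?dvdn_mulr // chinese_modl // modn_small.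
    by rewrite modn_dvdm ?dvdn_mull // chinese_modr // modn_small.
  apply: val_inj => /=; rewrite -(chinese_mod cmq) modn_small //.
rewrite big_distrlr pair_big /=; apply: eq_bigr => [[i j]] _ /=.
rewrite div_coprimeM // (@gcdn_modd m (m * q) (dvdn_mulr q (dvdnn m))) (@gcdn_modd q (m * q) (dvdn_mull m (dvdnn q))).
rewrite -(gcdn_modr m) -(gcdn_modr q) chinese_modl // chinese_modr //.
by rewrite !gcdn_modr.
Qed.

Local Open Scope ring_scope.

Definition F (r : nat) : rat := r%:R / (r.+1)%:R.

Lemma F_ge0 r : 0 <= F r.
Proof. by rewrite /F divr_ge0 ?ler0n. Qed.

Lemma F_le1 r : F r <= 1.
Proof. by rewrite /F ler_pdivrMr ?ltr0Sn // mul1r ler_nat. Qed.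

Definition Pf (B n : nat) : rat := \prod_(r < B | prime r && (r %| n)%N) F r.

Lemma Pf1 B : Pf B 1 = 1.
Proof.
by apply: big1 => r /andP[pr]; rewrite dvdn1 => /eqP r1; rewrite r1 in pr.
Qed.

Lemma Pf_split B m q a : prime q -> (q < B)%N -> coprime q m -> (0 < a)%N ->
  Pf B (m * q ^ a) = F q * Pf B m.
Proof.
move=> pq qB cqm a0; rewrite /Pf (bigD1 (Ordinal qB)) /=; last first.
  by rewrite pq dvdn_mull // dvdn_exp.
congr (_ * _); apply: eq_bigl => r /=.
case pr: (prime r) => //=.
rewrite Euclid_dvdM // Euclid_dvdX // (dvdn_prime2 pr pq) a0 andbT.
case: (eqVneq (val r) q) => [rq|rq].
  have -> : r == Ordinal qB by apply/eqP; apply: val_inj.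
  rewrite /= andbF; have -> : (r : nat) = q := rq.
  by apply/esym/negbTE; rewrite -prime_coprime.
have -> : (r != Ordinal qB) = true by apply/negP => /eqP h; move: rq; rewrite h eqxx.
by rewrite orbC andbT.
Qed.

Lemma S_pexp_lb q a : prime q -> ((q ^ a) ^ 2)%:R * F q <= (S (q ^ a))%:R.
Proof.
move=> pq.
have E : (q.+1)%:R * (S (q ^ a))%:R = (q ^ a.*2.+1 + 1)%:R :> rat.
  by rewrite -natrM -S_pexp_eq // addn1.
rewrite /F mulrA ler_pdivrMr ?ltr0Sn // [X in _ <= X]mulrC E -natrM ler_nat.
by rewrite -expnM muln2 mulnC -expnS leq_addr.
Qed.

Lemma lower_aux N : forall n, (n <= N)%N -> (0 < n)%N -> forall B, (n < B)%N ->
  (n ^ 2)%:R * Pf B n <= (S n)%:R.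
Proof.
elim: N => [|N IH] n hn n0 B nB; first by move: hn n0; rewrite leqn0 => /eqP ->.
case: (ltngtP n 1) => [n1|n1|->]; first by move: n0 n1; case: n {hn nB IH}.
  2: by rewrite Pf1 /S big_nat1 gcdn0 divnn.
have pq := pdiv_prime n1; set q := pdiv n in pq.
have [m cqm def_n] := pfactor_coprime pq n0; set a := logn q n in def_n.
have a0 : (0 < a)%N by rewrite logn_gt0 mem_primes pq n0 pdiv_dvd.
have m0 : (0 < m)%N by move: n0; rewrite def_n muln_gt0 => /andP[].
have q1 := prime_gt1 pq.
have qa1 : (1 < q ^ a)%N by rewrite -{1}(expn0 q) ltn_exp2l.
have mn : (m < n)%N by rewrite def_n ltn_Pmulr.
have qB : (q < B)%N.
  by apply: leq_ltn_trans nB; apply: dvdn_leq => //; exact: pdiv_dvd.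
have IHm := IH m (ltnSE (leq_trans mn hn)) m0 B (ltn_trans mn nB).
have cmqa : coprime m (q ^ a) by rewrite coprime_pexpr // coprime_sym.
have qa0 : (0 < q ^ a)%N by exact: ltnW.
rewrite def_n Pf_split // S_mul //.
rewrite natrM.
have -> : ((m * q ^ a) ^ 2)%:R * (F q * Pf B m) = ((m ^ 2)%:R * Pf B m) * (((q ^ a) ^ 2)%:R * F q).
  by rewrite expnMn natrM; ring.
apply: ler_pM.
- by rewrite mulr_ge0 ?ler0n // prodr_ge0 // => r _; exact: F_ge0.
- by rewrite mulr_ge0 ?ler0n ?F_ge0.
- exact: IHm.
- exact: S_pexp_lb.
Qed.

Lemma lower n : (0 < n)%N -> forall B, (n < B)%N -> (n ^ 2)%:R * Pf B n <= (S n)%:R.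
Proof. exact: lower_aux (leqnn n). Qed.

Definition Gg (N : nat) : rat := N%:R * \prod_(0 <= r < N | prime r && (2 < r)%N) F r.

Lemma Gg_mono N : Gg N <= Gg N.+1.
Proof.
rewrite /Gg [X in _ <= _ * X]big_mkcond big_nat_recr //= -big_mkcond /=.
set X := \prod_(0 <= r < N | _) _.
have X0 : 0 <= X by apply: prodr_ge0 => r _; exact: F_ge0.
case: ifP => _.
  have E : (N.+1)%:R * (X * (N%:R / (N.+1)%:R)) = N%:R * X :> rat.
    by field; rewrite addrC natr1 pnatr_eq0.
  by rewrite /F E.
by rewrite mulr1 ler_wpM2r // ler_nat.
Qed.

Lemma Gg_le a b : (a <= b)%N -> Gg a <= Gg b.
Proof.
move=> ab; rewrite -(subnKC ab); elim: (b - a)%N => [|k IH]; first by rewrite addn0.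
by apply: le_trans IH _; rewrite addnS; exact: Gg_mono.
Qed.

Lemma h12_Gg : h12 = Gg 37.
Proof.
rewrite /h12 /Gg; congr (_ * _).
rewrite [RHS](@big_cat_nat _ _ _ 3 0 37) //= [X in _ = _ * X](@big_cat_nat _ _ _ 32 3 37) //=.
have Z1 : \prod_(0 <= i < 3 | prime i && (2 < i)%N) F i = 1.
  rewrite big_nat_cond big1 // => r /andP[/andP[_ h] /andP[_ h']].
  by move: h h'; case: r => [|[|[|r]]].
have Z2 : \prod_(32 <= i < 37 | prime i && (2 < i)%N) F i = 1.
  rewrite big_nat_cond big1 // => r /andP[/andP[h1 h2] /andP[pr _]].
  have A : all (fun r => ~~ prime r) (iota 32 5) by vm_compute.
  have: r \in iota 32 5 by rewrite mem_iota h1.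
  by move/(allP A); rewrite pr.
rewrite Z1 Z2 mul1r mulr1 big_nat_cond [RHS]big_nat_cond; apply: eq_bigl => r.
by case: (ltnP r 3) => h; rewrite ?andbF ?andbT //= ?andbT ?(leq_trans _ h).
Qed.

Lemma prod_sub (I : finType) (P Q : pred I) (f : I -> rat) :
  (forall i, P i -> Q i) -> (forall i, 0 <= f i <= 1) ->
  \prod_(i | Q i) f i <= \prod_(i | P i) f i.
Proof.
move=> PQ f01; rewrite (bigID P Q) /=.
rewrite (eq_bigl P); last by move=> i; case Pi: (P i); rewrite ?andbT ?andbF ?PQ.
apply: ler_piMr.
  by apply: prodr_ge0 => i _; case/andP: (f01 i).
by apply: prodr_ile1 => i _; exact: f01.
Qed.

Close Scope ring_scope.

Theorem lemma2p4 (gT : finGroupType) (G : {group gT}) (n p : nat) :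
  0 < n -> ~~ (2 %| n) -> p = max_pdiv n -> 37 <= p ->
  cyclic G -> #|G| = n ->
  (h12 * (n ^ 2)%:R / (p.+1)%:R <= (psi G)%:R :> rat)%R.
Proof.
move=> n0 odd_n def_p p37 cG oG.
rewrite (psi_cyclic cG) oG.
have n1 : 1 < n.
  rewrite ltn_neqAle n0 andbT; apply/eqP => n_1.
  by rewrite -n_1 in def_p; rewrite def_p in p37.
have pp : prime p by rewrite def_p; exact: max_pdiv_prime.
have pn : p %| n by rewrite def_p; exact: max_pdiv_dvd.
have pn' : p < n.+1 by rewrite ltnS; exact: dvdn_leq.
have L := lower n0 (ltnSn n).
rewrite /Pf (bigD1 (Ordinal pn')) /= ?pp ?pn // in L.
set Prest := (\prod_(i < n.+1 | _) F i)%R in L.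
have Q_le : (\prod_(i < n.+1 | prime i && (2 < i)%N && (i < p)%N) F i <= Prest)%R.
  apply: prod_sub => [i /andP[/andP[pi idn] ip]|i]; last by rewrite F_ge0 F_le1.
  rewrite pi /=; apply/andP; split.
    apply: odd_prime_gt2 pi.
    have : ~~ (2 %| i) by apply: contra odd_n => /dvdn_trans; apply.
    by rewrite dvdn2 negbK.
  rewrite ltn_neqAle; apply/andP; split.
    by move: ip; apply: contra => /eqP h; apply/eqP/val_inj.
  rewrite def_p; apply: max_pdiv_max.
  by rewrite mem_primes pi n0 idn.
have Qeq : (\prod_(i < n.+1 | prime i && (2 < i)%N && (i < p)%N) F i
         = \prod_(0 <= r < p | prime r && (2 < r)%N) F r)%R.
  rewrite -(big_mkord (fun i => prime i && (2 < i)%N && (i < p)%N) F).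
  rewrite (@big_cat_nat _ _ _ p 0 n.+1 _ _ (leq0n p) (ltnW pn')) /=.
  have Z : (\prod_(p <= i < n.+1 | prime i && (2 < i)%N && (i < p)%N) F i = 1)%R.
    rewrite big_nat_cond big1 // => r /andP[/andP[h _] /andP[_ h']].
    by rewrite ltnNge h in h'.
  rewrite Z GRing.mulr1 big_nat_cond [RHS]big_nat_cond; apply: eq_bigl => r.
  by case: (ltnP r p) => h; rewrite ?andbT ?andbF.
refine (le_trans _ L).
rewrite h12_Gg.
have G37 := Gg_le p37.
have p10 : ((p.+1)%:R != 0 :> rat)%R by rewrite pnatr_eq0.
apply: (@le_trans _ _ (Gg p * (n ^ 2)%:R / (p.+1)%:R)%R).
  apply: ler_wpM2r; first by rewrite invr_ge0 ler0n.
  by apply: ler_wpM2r; [exact: ler0n | exact: G37].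
rewrite /Gg -Qeq.
set Q := (\prod_(i < n.+1 | _) F i)%R.
have -> : (p%:R * Q * (n ^ 2)%:R / (p.+1)%:R = (n ^ 2)%:R * (F p * Q) :> rat)%R.
  by rewrite /F; field; rewrite addrC natr1.
have Q0 : (0 <= Q)%R by apply: prodr_ge0 => i _; exact: F_ge0.
apply: ler_pM; [exact: ler0n | | exact: lexx | ].
  by rewrite mulr_ge0 ?F_ge0.
apply: ler_pM; [exact: F_ge0 | exact: Q0 | exact: lexx | exact: Q_le].
Qed.
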